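(* Let $n\geq 1$. There exist functions $F\in C^\infty(\mathbb{R}^n)$ and $v\in C^\infty(\mathbb{R}^n)$ such that \[ \sum_{i,j=1}^n D_iv\,D_jv\,D^2_{ij}v\;+\;\sum_{i=1}^n D_iv\,D_iF\;=\;0\quad\text{on }\mathbb{R}^n, \] and open sets $\Omega^+,\Omega^-\subseteq\mathbb{R}^n$ such that \[ \sup_{\Omega^+} v\;>\;\max_{\partial\Omega^+} v \qquad\text{and}\qquad \inf_{\Omega^-} v\;<\;\min_{\partial\Omega^-} v , \] i.e. $v$ satisfies neither the Maximum nor the Minimum Principle.
   Context: $D_i=\partial/\partial x_i$ and $D^2_{ij}=\partial^2/\partial x_i\partial x_j$. The equation is the scalar $\infty$-Laplace equation perturbed by the linear first-order term $Dv\cdot DF$. *)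

(* Defs.v *)
From HB Require Import structures.
From mathcomp Require Import all_boot all_order all_algebra.
From mathcomp Require Import all_classical all_reals all_analysis.
Set Implicit Arguments. Unset Strict Implicit. Unset Printing Implicit Defensive.
Import Order.TTheory GRing.Theory Num.Theory.
Import numFieldNormedType.Exports.
Local Open Scope classical_set_scope.
Local Open Scope ring_scope.

Definition evec (R : realType) (n : nat) (i : 'I_n) : 'rV[R]_n := delta_mx 0 i.

Definition partial (R : realType) (n : nat) (f : 'rV[R]_n -> R) (i : 'I_n)
  : 'rV[R]_n -> R := fun x => 'D_(evec R i) f x.

Fixpoint iter_partial (R : realType) (n : nat) (l : seq 'I_n) (f : 'rV[R]_n -> R)
  : 'rV[R]_n -> R :=
  match l with
  | [::] => f
  | i :: l' => partial (iter_partial l' f) i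
  end.

Definition smooth (R : realType) (n : nat) (f : 'rV[R]_n -> R) : Prop :=
  forall l : seq 'I_n,
    continuous (iter_partial l f) /\
    (forall (i : 'I_n) (x : 'rV[R]_n), derivable (iter_partial l f) x (evec R i)).

Definition boundary (R : realType) (n : nat) (A : set 'rV[R]_n) : set 'rV[R]_n :=
  closure A `\` interior A.

(* Main.v *)
Set Warnings "-all".
Set Implicit Arguments. Unset Strict Implicit.
From HB Require Import structures.
From mathcomp Require Import all_boot all_order all_algebra.
From mathcomp Require Import all_classical all_reals all_analysis.
From mathcomp Require Import lra ring.
Require Import Defs.
Import Order.TTheory GRing.Theory Num.Theory.
Import numFieldNormedType.Exports.
Local Open Scope classical_set_scope.
Local Open Scope ring_scope.

Section PS.
Variables (R : realType) (n : nat).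

Definition polysum (P : 'I_n -> {poly R}) : 'rV[R]_n -> R :=
  fun x => \sum_(k < n) (P k).[x ord0 k].

Lemma evecE (i k : 'I_n) : evec R i ord0 k = (i == k)%:R.
Proof. by rewrite /evec mxE /= eq_sym. Qed.

Lemma polysum_shift P (i : 'I_n) x (h : R) :
  polysum P (h *: evec R i + x) - polysum P x
  = (P i).[h + x ord0 i] - (P i).[x ord0 i].
Proof.
rewrite /polysum (bigD1 i) //= [in X in _ - X](bigD1 i) //=.
rewrite !mxE !eqxx mulr1.
rewrite (eq_bigr (fun k => (P k).[x ord0 k])); last first.
  by move=> k /negbTE ki; rewrite !mxE /= ki mulr0 add0r.
by rewrite opprD addrACA subrr addr0.
Qed.

Lemma polysum_dq P (i : 'I_n) x :
  (fun h : R => h^-1 *: ((polysum P \o shift x) (h *: evec R i) - polysum P x))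
  = (fun h : R => h^-1 *: ((horner (P i) \o shift (x ord0 i)) (h *: 1) - (P i).[x ord0 i])).
Proof.
apply/funext => h /=; rewrite /shift /= polysum_shift.
by rewrite [h *: 1]mulr1 addrC.
Qed.

Lemma polysum_derivable P i x : derivable (polysum P) x (evec R i).
Proof.
rewrite /derivable polysum_dq; exact: derivable_horner.
Qed.

Lemma polysum_partial P i :
  partial (polysum P) i = polysum (fun k => if k == i then (P i)^`() else 0).
Proof.
apply/funext => x; rewrite /partial /derive polysum_dq.
rewrite -/(derive (horner (P i)) (x ord0 i) 1) -derive1E -derivE.
rewrite /polysum (bigD1 i) //= eqxx big1 ?addr0 //.
by move=> k /negbTE ->; rewrite horner0.
Qed.

Lemma polysum_continuous P : continuous (polysum P).
Proof.
move=> x; rewrite /polysum.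
Abort.

End PS.
Lemma hc (R : realType) (p : {poly R}) : continuous (horner p).
Proof. move=> x; apply: differentiable_continuous; apply/derivable1_diffP; exact: derivable_horner. Qed.

Lemma polysum_continuous (R : realType) n P : continuous (@polysum R n P).
Proof.
rewrite /polysum.
have : forall s : seq 'I_n, continuous (fun y : 'rV[R]_n => \sum_(k <- s) (P k).[y ord0 k]).
  elim => [|k s IH].
    have -> : (fun y : 'rV[R]_n => \sum_(k <- [::]) (P k).[y ord0 k]) = cst 0.
      by apply/funext => y; rewrite big_nil.
    exact: cst_continuous.
  have -> : (fun y : 'rV[R]_n => \sum_(j <- k :: s) (P j).[y ord0 j]) =
     (fun y : 'rV[R]_n => (P k).[y ord0 k]) + (fun y : 'rV[R]_n => \sum_(j <- s) (P j).[y ord0 j]).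
    by apply/funext => y; rewrite big_cons.
  move=> x; apply: continuousD; last exact: IH.
  apply: continuous_comp; first exact: coord_continuous.
  exact: hc.
by move/(_ (index_enum _)).
Qed.

Lemma polysum_iter (R : realType) n P (l : seq 'I_n) :
  exists Q, iter_partial l (@polysum R n P) = @polysum R n Q.
Proof.
elim: l => [|i l [Q IH]]; first by exists P.
by exists (fun k => if k == i then (Q i)^`() else 0); rewrite /= IH polysum_partial.
Qed.

Lemma polysum_smooth (R : realType) n P : smooth (@polysum R n P).
Proof.
move=> l; have [Q ->] := polysum_iter P l.
split; [exact: polysum_continuous | move=> i x; exact: polysum_derivable].
Qed.
Lemma L1 (R : realType) n (M : 'rV[R]_n) k : `|M ord0 k| <= `|M|.
Proof.
by rewrite [leRHS]/Num.Def.normr /= mx_normrE; apply/bigmax_geP; right => /=; exists (ord0, k).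
Qed.

Lemma L2 (R : realType) n (M : 'rV[R]_n) r : 0 <= r ->
  (forall k, `|M ord0 k| <= r) -> `|M| <= r.
Proof.
move=> r0 H; rewrite [leLHS]/Num.Def.normr /= mx_normrE; apply/bigmax_leP; split => //.
by move=> [i j] _ /=; rewrite (ord1 i); exact: H.
Qed.

Lemma L3 (R : realType) n (M : 'rV[R]_n) : 0 < `|M| -> exists k, `|M| = `|M ord0 k|.
Proof.
move=> M0; have := @mx_norm_neq0 R 1 n M.
case. by rewrite -/(Num.Def.normr M) gt_eqF.
move=> [i j] /= H; exists j; move: H; rewrite (ord1 i) => H; exact: H.
Qed.

Lemma bdP (R : realType) n (c y : 'rV[R]_n) (r : R) : 0 < r ->
  boundary (ball c r) y <-> ((forall k, `|c ord0 k - y ord0 k| <= r) /\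
                             exists k, `|c ord0 k - y ord0 k| = r).
Proof.
move=> r0; rewrite /boundary (proj1 (interior_id _) (ball_open c r)).
rewrite -/(closed_ball c r) closed_ballE // /closed_ball_ -ball_normE /ball_ /=.
have E k : `|c ord0 k - y ord0 k| <= `|c - y|.
  by have := L1 (c - y) k; rewrite !mxE.
split.
- move=> [H1 H2]; have H3 : r <= `|c - y| by rewrite leNgt; apply/negP.
  split; first by move=> k; apply: le_trans H1.
  have [k Hk] := L3 (lt_le_trans r0 H3).
  exists k; move: Hk; rewrite !mxE => Hk; rewrite -Hk.
  by apply/eqP; rewrite eq_le H1 H3.
- move=> [H1 [k Hk]]; split.
    by apply: L2 (ltW r0) _ => j; rewrite !mxE.
  apply/negP; rewrite -leNgt -Hk; exact: E.
Qed.

Lemma bball (R : realType) n (c : 'rV[R]_n) (r : R) : bounded_set (ball c r).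
Proof.
rewrite /= /bounded_near.
have := nbhs_pinfty_gt (num_real (`|c| + r)); apply: filterS => M HM x.
rewrite -ball_normE /ball_ /= => Bx.
have -> : x = c - (c - x) by rewrite opprB addrC subrK.
apply: le_trans (ler_normB _ _) _; apply/ltW; apply: le_lt_trans HM.
by rewrite lerD2l ltW.
Qed.

Lemma gmax (R : realType) (t : R) : `|-1 - t| <= 2^-1 -> t^+3 - 3 * t <= 2.
Proof.
rewrite ler_norml => /andP[a b].
have h : 0 <= (t+1)^+2 * (2 - t) by apply: mulr_ge0; [exact: sqr_ge0 | lra].
nra.
Qed.
Lemma gmax2 (R : realType) (t : R) : `|-1 - t| = 2^-1 -> t^+3 - 3 * t <= 11/8.
Proof.
move/eqP; rewrite eqr_norml => /andP[/orP[/eqP a|/eqP a] _].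
  have -> : t = -3/2 by lra.
  lra.
have -> : t = -1/2 by lra.
lra.
Qed.
Lemma gmin (R : realType) (t : R) : `|1 - t| <= 2^-1 -> -2 <= t^+3 - 3 * t.
Proof.
rewrite ler_norml => /andP[a b].
have h : 0 <= (t-1)^+2 * (t + 2) by apply: mulr_ge0; [exact: sqr_ge0 | lra].
nra.
Qed.
Lemma gmin2 (R : realType) (t : R) : `|1 - t| = 2^-1 -> - (11/8) <= t^+3 - 3 * t.
Proof.
move/eqP; rewrite eqr_norml => /andP[/orP[/eqP a|/eqP a] _].
  have -> : t = 1/2 by lra.
  lra.
have -> : t = 3/2 by lra.
lra.
Qed.

Lemma polysum_if (R : realType) n (p : {poly R}) (i : 'I_n) x :
  polysum (fun k => if k == i then p else 0) x = p.[x ord0 i].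
Proof.
rewrite /polysum (bigD1 i) //= eqxx big1 ?addr0 //.
by move=> k /negbTE ->; rewrite horner0.
Qed.

Lemma eqn_ok (R : realType) n (g : {poly R}) (x : 'rV[R]_n) :
  let v := polysum (fun _ : 'I_n => g) in
  let F := polysum (fun _ : 'I_n => - (2^-1) *: (g^`() * g^`())) in
  \sum_(i < n) \sum_(j < n)
     partial v i x * partial v j x * partial (partial v j) i x
  + \sum_(i < n) partial v i x * partial F i x = 0.
Proof.
move=> v F.
have Pv i : partial v i x = (g^`()).[x ord0 i] by rewrite polysum_partial polysum_if.
have PF i : partial F i x = - ((g^`()).[x ord0 i] * (g^`()^`()).[x ord0 i]).
  by rewrite polysum_partial polysum_if derivZ derivM !hornerE; field.
have Pvv a b : partial (partial v b) a x = if a == b then (g^`()^`()).[x ord0 a] else 0.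
  rewrite polysum_partial polysum_partial polysum_if.
  by case: eqP => [->|_]; rewrite ?deriv0 ?horner0.
rewrite -big_split /=; apply: big1 => i _.
rewrite (bigD1 i) //= big1; last by move=> j /negbTE ji; rewrite Pvv eq_sym ji mulr0.
rewrite Pvv eqxx PF !Pv; ring.
Qed.

Lemma sumD1c (R : realType) n (c : R) (i j : 'I_n) :
  \sum_(k < n | k != i) c = \sum_(k < n | k != j) c.
Proof.
have Hi : \sum_(k < n | k != i) c = \sum_(k < n) c - c by rewrite [in RHS](bigD1 i) //= addrC addrK.
have Hj : \sum_(k < n | k != j) c = \sum_(k < n) c - c by rewrite [in RHS](bigD1 j) //= addrC addrK.
by rewrite Hi Hj.
Qed.

Theorem mainTheorem3 (R : realType) (n : nat) (hn : (1 <= n)%N) :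
  exists (F v : 'rV[R]_n -> R),
    smooth F /\ smooth v /\
    (forall x : 'rV[R]_n,
       \sum_(i < n) \sum_(j < n)
          partial v i x * partial v j x * partial (partial v j) i x
       + \sum_(i < n) partial v i x * partial F i x = 0) /\
    (exists Omega_p : set 'rV[R]_n,
       [/\ open Omega_p, bounded_set Omega_p &
         exists2 y0, boundary Omega_p y0 &
           (forall y, boundary Omega_p y -> v y <= v y0) /\
           (exists2 x, Omega_p x & v y0 < v x)]) /\
    (exists Omega_m : set 'rV[R]_n,
       [/\ open Omega_m, bounded_set Omega_m &
         exists2 y0, boundary Omega_m y0 &
           (forall y, boundary Omega_m y -> v y0 <= v y) /\
           (exists2 x, Omega_m x & v x < v y0)]).
Proof.
pose g : {poly R} := 'X^3 - 3%:P * 'X.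
have gE t : g.[t] = t^+3 - 3 * t by rewrite /g !hornerE.
pose i0 : 'I_n := Ordinal hn.
have r0 : (0 : R) < 2^-1 by [].
exists (polysum (fun _ : 'I_n => - (2^-1) *: (g^`() * g^`()))), (polysum (fun _ : 'I_n => g)).
split; first exact: polysum_smooth.
split; first exact: polysum_smooth.
split; first by move=> x; apply: eqn_ok.
have vE (y : 'rV[R]_n) i : polysum (fun _ : 'I_n => g) y = g.[y ord0 i] + \sum_(k < n | k != i) g.[y ord0 k].
  by rewrite /polysum (bigD1 i).
split.
- pose c : 'rV[R]_n := const_mx (-1).
  pose y0 := c + 2^-1 *: evec R i0.
  have y0E k : c ord0 k - y0 ord0 k = - (2^-1 * (i0 == k)%:R).
    by rewrite !mxE /= eq_sym; ring.
  exists (ball c (2^-1)); split; [exact: ball_open | exact: bball |].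
  have Vy0 : polysum (fun _ : 'I_n => g) y0 = 11/8 + \sum_(k < n | k != i0) 2.
    rewrite (vE _ i0); congr (_ + _).
      rewrite gE !mxE eqxx /=; lra.
    apply: eq_bigr => k /negbTE ki; rewrite gE !mxE /= ki mulr0n mulr0 addr0; lra.
  exists y0.
    apply/bdP => //; split.
      move=> k; rewrite y0E normrN normrM; case: (i0 == k) => /=.
        by rewrite normr1 mulr1 ger0_norm.
      by rewrite normr0 mulr0.
    by exists i0; rewrite y0E eqxx mulr1 normrN ger0_norm.
  split.
    move=> y /(bdP _ _ r0) [H1 [i Hi]].
    rewrite Vy0 (vE _ i) (sumD1c _ i0 i); apply: lerD; first by rewrite gE; apply: gmax2; move: Hi; rewrite mxE.
    apply: ler_sum => k _; rewrite gE; apply: gmax; by have := H1 k; rewrite mxE.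
  exists c; first exact: ballxx.
  rewrite Vy0 (vE _ i0) gE mxE.
  have -> : \sum_(k < n | k != i0) g.[c ord0 k] = \sum_(k < n | k != i0) 2.
    by apply: eq_bigr => k _; rewrite gE mxE; lra.
  lra.
- pose c : 'rV[R]_n := const_mx 1.
  pose y0 := c - 2^-1 *: evec R i0.
  have y0E k : c ord0 k - y0 ord0 k = 2^-1 * (i0 == k)%:R.
    by rewrite !mxE /= eq_sym; ring.
  exists (ball c (2^-1)); split; [exact: ball_open | exact: bball |].
  have Vy0 : polysum (fun _ : 'I_n => g) y0 = - (11/8) + \sum_(k < n | k != i0) (-2).
    rewrite (vE _ i0); congr (_ + _).
      rewrite gE !mxE eqxx /=; lra.
    apply: eq_bigr => k /negbTE ki; rewrite gE !mxE /= ki mulr0n mulr0 subr0; lra.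
  exists y0.
    apply/bdP => //; split.
      move=> k; rewrite y0E normrM; case: (i0 == k) => /=.
        by rewrite normr1 mulr1 ger0_norm.
      by rewrite normr0 mulr0.
    by exists i0; rewrite y0E eqxx mulr1 ger0_norm.
  split.
    move=> y /(bdP _ _ r0) [H1 [i Hi]].
    rewrite Vy0 (vE _ i) (sumD1c _ i0 i); apply: lerD; first by rewrite gE; apply: gmin2; move: Hi; rewrite mxE.
    apply: ler_sum => k _; rewrite gE; apply: gmin; by have := H1 k; rewrite mxE.
  exists c; first exact: ballxx.
  rewrite Vy0 (vE _ i0) gE mxE.
  have -> : \sum_(k < n | k != i0) g.[c ord0 k] = \sum_(k < n | k != i0) (-2).
    by apply: eq_bigr => k _; rewrite gE mxE; lra.
  lra.
Qed.
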